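(* Let $p$ be an odd prime and let $a,b,c$ be positive integers such that $c$ is a primitive divisor of $p^a-1$ and $bc$ is a primitive divisor of $p^{ab}-1$. If $bc$ is odd, then $$\Gamma\Big(\tfrac{p^{ab}-1}{bc},\,p^{ab}\Big)\;\cong\;\vec{\square}^{\,b}\,\Gamma\Big(\tfrac{p^a-1}{c},\,p^a\Big),$$ the directed Cartesian product of $b$ copies of $\Gamma(\tfrac{p^a-1}{c},p^a)$.
   Context: An integer $e$ is a primitive divisor of $p^a-1$ if $e\mid p^a-1$ and $e\nmid p^t-1$ for every $1\le t<a$. For a prime power $q$ and $k\mid q-1$, the generalized Paley graph $\Gamma(k,q)$ is the Cayley digraph $\mathrm{Cay}(\mathbb{F}_q,R_k)$ with $R_k=\{x^k:x\in\mathbb{F}_q^*\}$: vertex set $\mathbb{F}_q$, with an arc from $u$ to $v$ iff $v-u\in R_k$ (two opposite arcs are regarded as one undirected edge). The directed Cartesian product $\Gamma_1\,\vec{\square}\cdots\vec{\square}\,\Gamma_b$ of digraphs has vertex set $V(\Gamma_1)\times\cdots\times V(\Gamma_b)$, with an arc from $(v_i)$ to $(w_i)$ iff there is exactly one $j$ with $v_jw_j$ an arc of $\Gamma_j$ and $v_i=w_i$ for all $i\ne j$. *)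

(* Defs.v *)
From HB Require Import structures.
From mathcomp Require Import all_boot all_order all_algebra all_fingroup all_field.
Set Implicit Arguments. Unset Strict Implicit. Unset Printing Implicit Defensive.
Import GRing.Theory.

Definition primitive_divisor (e p a : nat) : Prop :=
  (e %| p ^ a - 1)%N /\ (forall t : nat, (0 < t)%N -> (t < a)%N -> ~~ (e %| p ^ t - 1)%N).

(* Arc relation of the generalized Paley digraph Gamma(k, F) = Cay(F, R_k),
   R_k = { x^k : x in F^* }: arc u -> v iff v - u in R_k. *)
Definition paley_arc (F : finFieldType) (k : nat) : rel F :=
  fun u v => [exists x : F, (x != 0)%R && (v - u == x ^+ k)%R].

Definition dcart_pow (V : finType) (e : rel V) (b : nat) : rel {ffun 'I_b -> V} :=
  fun f g =>
    #|[set j : 'I_b | e (f j) (g j) && [forall i : 'I_b, (i != j) ==> (f i == g i)]]| == 1%N.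

Definition digraph_iso (V W : finType) (e1 : rel V) (e2 : rel W) : Prop :=
  exists phi : V -> W, bijective phi /\ forall u v, e1 u v = e2 (phi u) (phi v).
Arguments paley_arc : clear implicits.
Arguments dcart_pow V e b : clear implicits.

(* Main.v *)
Require Import Defs.
From HB Require Import structures.
From mathcomp Require Import all_boot all_order all_algebra all_fingroup all_solvable all_field.
From Stdlib Require Import ClassicalEpsilon.
Import GRing.Theory.
Open Scope ring_scope.

Definition mkRM (R S : nzRingType) (f : R -> S) (fB : forall x y, f (x - y) = f x - f y)
  (fM : GRing.monoid_morphism f) : {rmorphism R -> S} :=
  HB.pack f (GRing.isZmodMorphism.Build _ _ f fB) (GRing.isMonoidMorphism.Build _ _ f fM).

Definition iP p (K : finFieldType) (pK : p \in [pchar K]) : {rmorphism 'F_p -> K}.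
refine (@mkRM 'F_p K (in_alg (pPrimeCharType pK)) _ _).
- move=> x y. exact: (rmorphB (in_alg (pPrimeCharType pK))).
- split. exact: (rmorph1 (in_alg (pPrimeCharType pK))).
  move=> x y. exact: (rmorphM (in_alg (pPrimeCharType pK))).
Defined.
Arguments iP {p K}.

Lemma expf_cardm1 (E : finFieldType) (x : E) : x != 0 -> x ^+ #|E|.-1 = 1.
Proof.
move=> nx; have := expf_card x.
rewrite -(prednK (ltnW (finNzRing_gt1 E))) exprS => h.
by apply: (mulfI nx); rewrite h mulr1.
Qed.

Lemma expf_card_iter (E : finFieldType) (x : E) m : x ^+ (#|E| ^ m) = x.
Proof.
elim: m => [|m IH]; first by rewrite expn0 expr1.
by rewrite expnS mulnC exprM IH expf_card.
Qed.

Lemma prim_gen (E : finFieldType) : exists u : E, (#|E|.-1).-primitive_root u.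
Proof.
have gt1 := finNzRing_gt1 E.
have h := @has_prim_root E #|E|.-1 (enum [pred x : E | x != 0]).
have /hasP[u _ pu] : has (#|E|.-1).-primitive_root (enum [pred x : E | x != 0]).
  apply: h.
  - by rewrite -ltnS prednK // ltnW.
  - apply/allP => x; rewrite mem_enum inE => nx.
    by rewrite unity_rootE expf_cardm1.
  - exact: enum_uniq.
  - rewrite -cardE.
    have -> : #|[pred x : E | x != 0]| = #|predC1 (0 : E)| by apply: eq_card.
    by rewrite cardC1.
by exists u.
Qed.

Lemma mu_char (E : finFieldType) (d : nat) (x : E) : (d %| #|E|.-1)%N -> (0 < d)%N ->
  (x ^+ d == 1) = [exists y : E, (y != 0) && (x == y ^+ (#|E|.-1 %/ d))].
Proof.
move=> dd d0; have [u pu] := prim_gen E.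
apply/idP/existsP.
- move/eqP=> xd.
  have pz := dvdn_prim_root pu dd.
  have [i ->] := prim_rootP pz xd.
  exists (u ^+ i); rewrite -!exprM mulnC eqxx andbT expf_eq0.
  rewrite (prim_root_eq0 pu).
  have := finNzRing_gt1 E.
  by case: #|E| => [|[|n]] //; rewrite andbF.
- case=> y /andP[ny /eqP ->].
  by rewrite -exprM divnK // expf_cardm1.
Qed.

Lemma arc_char (E : finFieldType) (d : nat) (x y : E) : (d %| #|E|.-1)%N -> (0 < d)%N ->
  [exists z : E, (z != 0) && (y - x == z ^+ (#|E|.-1 %/ d))] = ((y - x) ^+ d == 1).
Proof. by move=> dd d0; rewrite mu_char. Qed.
Arguments expf_cardm1 {E x}.
Lemma embed (K F : finFieldType) p m : p \in [pchar K] -> p \in [pchar F] ->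
  #|F| = (#|K| ^ m)%N -> exists psi : {rmorphism K -> F}, True.
Proof.
move=> pK pF HF.
pose iK := iP pK; pose iF := iP pF.
have [w pw] := prim_gen K.
pose ev f := (map_poly iK f).[w].
have evB f g : ev (f - g) = ev f - ev g by rewrite /ev rmorphB hornerD hornerN.
have evM f g : ev (f * g) = ev f * ev g by rewrite /ev rmorphM hornerM.
have evD f g : ev (f + g) = ev f + ev g by rewrite /ev rmorphD hornerD.
have hgen : forall x : K, exists f, x = ev f.
  move=> x; case: (eqVneq x 0) => [->|nx]; first by exists 0; rewrite /ev rmorph0 horner0.
  have /(prim_rootP pw)[i ->] := expf_cardm1 nx.
  by exists 'X^i; rewrite /ev map_polyXn hornerXn.
pose XQ : {poly 'F_p} := 'X^#|F| - 'X.
have evXQ : ev XQ = 0.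
  by rewrite evB /ev map_polyXn map_polyX hornerXn hornerX HF expf_card_iter subrr.
have XQn0 : XQ != 0.
  apply/eqP => h; have := congr1 (fun f : {poly 'F_p} => f`_#|F|) h.
  rewrite coefB coefXn coefX eqxx coef0.
  have -> : (#|F| == 1%N) = false by case: #|F| (finNzRing_gt1 F) => [|[|n]].
  by rewrite subr0 => /eqP; rewrite oner_eq0.
pose P n := exists f, [/\ f != 0, ev f = 0 & size f = n].
pose Pb n := if excluded_middle_informative (P n) then true else false.
have PbP n : Pb n = true <-> P n.
  by rewrite /Pb; case: excluded_middle_informative.
have exP : exists n, Pb n by exists (size XQ); apply/PbP; exists XQ.
case: (ex_minnP exP) => n /PbP [m0 [m0n0 evm0 sm0]] minn.
have mdvd : forall f, ev f = 0 -> m0 %| f.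
  move=> f ef.
  have er : ev (f %% m0) = 0.
    have := divp_eq f m0 => /(congr1 ev); rewrite evD evM evm0 mulr0 add0r ef.
    by move=> <-.
  case: (eqVneq (f %% m0) 0) => [h|rn0]; first by rewrite /dvdp h.
  have := minn (size (f %% m0)) (proj2 (PbP _) (ex_intro _ (f %% m0) (And3 rn0 er erefl))).
  by rewrite -sm0 leqNgt ltn_modp m0n0.
pose mF := map_poly iF m0.
have : mF %| \prod_(x : F) ('X - x%:P).
  by rewrite -finField_genPoly /mF -(map_polyXn iF) -(map_polyX iF) -rmorphB dvdp_map; apply: mdvd.
case/dvdp_prod_XsubC => ms hms.
have szm : (1 < size m0)%N.
  case: ltnP => // le1.
  have hc := size1_polyC le1.
  move: evm0; rewrite hc /ev map_polyC hornerC => /eqP; rewrite fmorph_eq0 => /eqP c0.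
  by move: m0n0; rewrite hc c0 eqxx.
move: hms; set s := mask ms _ => hms.
have : s != [::].
  apply: contraTneq szm => s0.
  by rewrite -(size_map_poly iF) (eqp_size hms) s0 big_nil size_poly1.
case: s hms => [//|z s'] hms _.
have rz : (map_poly iF m0).[z] = 0.
  by apply/eqP; have := eqp_root hms z; rewrite /root => ->; rewrite -/(root _ z) root_prod_XsubC mem_head.
pose evF f := (map_poly iF f).[z].
have evFB f g : evF (f - g) = evF f - evF g by rewrite /evF rmorphB hornerD hornerN.
have evFM f g : evF (f * g) = evF f * evF g by rewrite /evF rmorphM hornerM.
have hgenb x : exists f, x == ev f by have [f ->] := hgen x; exists f.
pose psi x := evF (xchoose (hgenb x)).
have key f : psi (ev f) = evF f.
  have /eqP e := xchooseP (hgenb (ev f)).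
  have : ev (xchoose (hgenb (ev f)) - f) = 0 by rewrite evB -e subrr.
  move/mdvd; rewrite dvdp_eq => /eqP hd.
  apply/eqP; by rewrite -subr_eq0 /psi -evFB hd evFM /evF rz mulr0.
have psiB : forall x y, psi (x - y) = psi x - psi y.
  move=> x y; have [fx ->] := hgen x; have [fy ->] := hgen y.
  by rewrite -evB !key evFB.
have psiM : GRing.monoid_morphism psi.
  split.
    have -> : (1 : K) = ev 1 by rewrite /ev rmorph1 hornerC.
    by rewrite key /evF rmorph1 hornerC.
  move=> x y; have [fx ->] := hgen x; have [fy ->] := hgen y.
  by rewrite -evM !key evFM.
by exists (@mkRM K F psi psiB psiM).
Qed.
Arguments embed {K F p m}.

Lemma frob_sum (E : fieldType) (N : nat) (I : Type) (r : seq I) (f : I -> E) :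
  (0 < N)%N -> [pchar E].-nat N ->
  (\sum_(i <- r) f i) ^+ N = \sum_(i <- r) f i ^+ N.
Proof.
move=> N0 hN; elim: r => [|x r IH]; first by rewrite !big_nil expr0n; case: N N0 hN.
by rewrite !big_cons exprDn_pchar // IH.
Qed.

Lemma no_small_root (E : finFieldType) (g : E) (N n : nat) (cs : 'I_n -> E) :
  (0 < N)%N -> [pchar E].-nat N ->
  (forall i j, cs i ^+ (N ^ j) = cs i) ->
  uniq [seq g ^+ (N ^ j) | j <- iota 0 n] ->
  \sum_(i < n) cs i * g ^+ i = 0 -> forall i, cs i = 0.
Proof.
case: n cs => [|n] cs N0 hN hfix hu hs i; first by case: i.
pose P := \poly_(k < n.+1) cs (inord k).
have coefP k : (k < n.+1)%N -> P`_k = cs (inord k) by move=> hk; rewrite coef_poly hk.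
have evP y : P.[y] = \sum_(k < n.+1) cs k * y ^+ k.
  by rewrite horner_poly; apply: eq_bigr => k _; rewrite inord_val.
case: (eqVneq P 0) => [P0|Pn0].
  by have := coefP i (ltn_ord i); rewrite P0 coef0 inord_val.
suff hall : all (root P) [seq g ^+ (N ^ j) | j <- iota 0 n.+1].
  by have := max_poly_roots Pn0 hall hu; rewrite size_map size_iota ltnNge size_poly.
apply/allP => y /mapP[j _ ->].
rewrite /root evP.
have -> : \sum_(k < n.+1) cs k * (g ^+ (N ^ j)) ^+ k
          = \sum_(k < n.+1) cs k ^+ (N ^ j) * (g ^+ (N ^ j)) ^+ k.
  by apply: eq_bigr => k _; rewrite hfix.
have h0 : (0:E) ^+ (N ^ j) = 0 by rewrite expr0n expn_eq0 eqn0Ngt N0.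
have := congr1 (fun t => t ^+ (N ^ j)) hs => /=.
rewrite frob_sum ?expn_gt0 ?N0 ?pnatX ?hN // h0 => h; apply/eqP; apply: etrans _ h.
by apply: eq_bigr => k _; rewrite exprMn -!exprM mulnC.
Qed.
Arguments no_small_root {E g N n cs}.

Theorem mainTheorem2 (p a b c : nat) (F K : finFieldType) :
  prime p -> odd p -> (0 < a)%N -> (0 < b)%N -> (0 < c)%N ->
  primitive_divisor c p a ->
  primitive_divisor (b * c) p (a * b) ->
  odd (b * c) ->
  #|F| = (p ^ (a * b))%N -> #|K| = (p ^ a)%N ->
  digraph_iso (paley_arc F ((p ^ (a * b) - 1) %/ (b * c)))
              (dcart_pow K (paley_arc K ((p ^ a - 1) %/ c)) b).
Proof.
move=> pp _ a0 b0 c0 [hc _] [hbc hprim] _ HF HK.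
have pK : p \in [pchar K] := card_finPcharP HK pp.
have pF : p \in [pchar F] := card_finPcharP HF pp.
have HF' : #|F| = (#|K| ^ b)%N by rewrite HF HK expnM.
have [psi _] := embed pK pF HF'.
have NF : #|F|.-1 = (p ^ (a * b) - 1)%N by rewrite HF subn1.
have NK : #|K|.-1 = (p ^ a - 1)%N by rewrite HK subn1.
have bc0 : (0 < b * c)%N by rewrite muln_gt0 b0 c0.
have [u pu] := prim_gen F.
pose g := u ^+ (#|F|.-1 %/ (b * c)).
have pg : (b * c).-primitive_root g by apply: (dvdn_prim_root pu); rewrite NF.
have [v pv] := prim_gen K.
pose zeta := v ^+ (#|K|.-1 %/ c).
have pzK : c.-primitive_root zeta by apply: (dvdn_prim_root pv); rewrite NK.
have pz : c.-primitive_root (psi zeta) by rewrite fmorph_primitive_root.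
have fr (y : K) j : psi y ^+ ((p ^ a) ^ j) = psi y.
  by rewrite -rmorphXn -HK expf_card_iter.
pose Phi (h : {ffun 'I_b -> K}) := \sum_(i < b) psi (h i) * g ^+ i.
have cop : coprime (b * c) p.
  rewrite coprime_sym prime_coprime //; apply/negP => hp.
  have h1 : (p %| p ^ (a * b) - (p ^ (a * b) - 1))%N.
    apply: dvdn_sub; last exact: dvdn_trans hp hbc.
    by rewrite dvdn_exp // muln_gt0 a0 b0.
  by move: h1; rewrite subKn ?expn_gt0 ?prime_gt0 // dvdn1 => /eqP p1; move: pp; rewrite p1.
have hu : uniq [seq g ^+ ((p ^ a) ^ j) | j <- iota 0 b].
  rewrite map_inj_in_uniq ?iota_uniq //.
  suff H : forall j1 j2, (j1 <= j2)%N -> (j2 < b)%N ->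
      g ^+ ((p ^ a) ^ j1) = g ^+ ((p ^ a) ^ j2) -> j1 = j2.
    move=> j1 j2; rewrite !mem_iota !add0n /= => hj1 hj2 e.
    case: (leqP j1 j2) => hle; first exact: H hle hj2 e.
    by apply/esym/H => //; apply: ltnW.
  move=> j1 j2 hle hj2 /eqP; rewrite (eq_prim_root_expr pg) eq_sym.
  rewrite eqn_mod_dvd; last first.
    by apply: leq_pexp2l; rewrite ?expn_gt0 ?prime_gt0.
  rewrite -(subnKC hle) expnD -{2}(muln1 ((p ^ a) ^ j1)%N) -mulnBr Gauss_dvdr; last first.
    by rewrite -expnM coprimeXr.
  rewrite -expnM => hd.
  apply/eqP; rewrite -{1}(addn0 j1) eqn_add2l eq_sym; apply/contraT; rewrite -lt0n => ht.
  have := hprim (a * (j2 - j1))%N.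
  rewrite muln_gt0 a0 ht ltn_mul2l a0 /= hd => /(_ isT); apply.
  by rewrite (leq_ltn_trans (leq_subr j1 j2) hj2).
have Phi_inj : injective Phi.
  move=> h1 h2 e.
  have hs : \sum_(i < b) psi (h1 i - h2 i) * g ^+ i = 0.
    rewrite -[RHS](subrr (Phi h1)) {2}e /Phi -sumrB.
    by apply: eq_bigr => i _; rewrite rmorphB mulrBl.
  have N0 : (0 < (p ^ a))%N by rewrite expn_gt0 prime_gt0.
  have hN : [pchar F].-nat (p ^ a)%N.
    by rewrite (eq_pnat _ (pcharf_eq pF)) pnatX pnat_id.
  have hfix : forall (k : 'I_b) j, psi (h1 k - h2 k) ^+ ((p ^ a) ^ j) = psi (h1 k - h2 k).
    by move=> k j; rewrite fr.
  have H := no_small_root N0 hN hfix hu hs.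
  by apply/ffunP => i; apply/eqP; rewrite -subr_eq0 -(fmorph_eq0 psi) H.
have Phi_bij : bijective Phi.
  by apply: (inj_card_bij Phi_inj); rewrite card_ffun card_ord HF'.
have PhiE (j : 'I_b) t : Phi [ffun i => if i == j then t else 0] = psi t * g ^+ j.
  rewrite /Phi (bigD1 j) //= ffunE eqxx big1 ?addr0 // => i /negbTE nij.
  by rewrite ffunE nij rmorph0 mul0r.
have arcE (d : {ffun 'I_b -> K}) : (Phi d ^+ (b * c) == 1) =
    [exists j, ((d j) ^+ c == 1) && [forall i, (i != j) ==> (d i == 0)]].
  apply/idP/existsP.
  - move/eqP/(prim_rootP pg) => [n hn].
    have hj : (n %% b < b)%N by rewrite ltn_pmod.
    pose j := Ordinal hj.
    have hgb : ((g ^+ b) ^+ (n %/ b)) ^+ c = 1.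
      by rewrite -(exprM g b) -(exprM g (b * _)) mulnAC (exprM g) (prim_expr_order pg) expr1n.
    have [i hi] := prim_rootP pz hgb.
    have : Phi d = Phi [ffun k => if k == j then zeta ^+ i else 0].
      rewrite PhiE hn rmorphXn -hi -exprM -exprD /=.
      by congr (_ ^+ _); rewrite (mulnC b (n %/ b)%N); exact: divn_eq.
    move/Phi_inj => ->; exists j; rewrite ffunE eqxx.
    rewrite exprAC (prim_expr_order pzK) expr1n eqxx /=.
    by apply/forallP => k; apply/implyP => /negbTE nk; rewrite ffunE nk.
  - case=> j /andP[/eqP dj /forallP hd].
    have -> : d = [ffun i => if i == j then d j else 0].
      apply/ffunP => i; rewrite ffunE; case: eqVneq => [->//|nij].
      by apply/eqP; have := hd i; rewrite nij.
    rewrite PhiE exprMn -rmorphXn mulnC exprM dj expr1n rmorph1 mul1r.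
    by rewrite -exprM (mulnC c b) mulnC exprM (prim_expr_order pg) expr1n.
case: Phi_bij => Phiinv c1 c2.
exists Phiinv; split; first by exists Phi.
move=> x y; rewrite -{1}(c2 x) -{1}(c2 y).
set h1 := Phiinv x; set h2 := Phiinv y.
rewrite /paley_arc -NF arc_char ?NF //.
have -> : Phi h2 - Phi h1 = Phi [ffun i => h2 i - h1 i].
  rewrite /Phi -sumrB; apply: eq_bigr => i _; by rewrite ffunE rmorphB mulrBl.
rewrite arcE /dcart_pow.
set S := [set j | _].
have SE : S = [set j | ([ffun i => h2 i - h1 i] j ^+ c == 1) &&
   [forall i, (i != j) ==> ([ffun i => h2 i - h1 i] i == 0)]].
  apply/setP => j; rewrite !inE -NK arc_char ?NK //.
  congr (_ && _); first by rewrite ffunE.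
  apply: eq_forallb => i.
  by rewrite ffunE subr_eq0 [h2 i == _]eq_sym.
rewrite SE; set d := [ffun i => h2 i - h1 i].
apply/existsP/cards1P.
- case=> j hj; exists j; apply/setP => k; rewrite !inE.
  apply/idP/eqP => [/andP[dk /forallP hk]|->//].
  case/andP: hj => /eqP dj /forallP hj.
  apply/eqP; apply/negP => /negP njk.
  by move: dj; have := hk j; rewrite eq_sym njk /= => /eqP ->; rewrite expr0n eqn0Ngt c0 /= => /eqP; rewrite eq_sym oner_eq0.
- case=> j hS; exists j.
  by have := set11 j; rewrite -hS inE.
Qed.
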